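(* Let $\delta>0$ with $2\delta<\frac1\delta-1$ and $\delta<\frac14$, let $T_\delta$ be as in the context, let $\phi_\delta(x)=\int_1^x\int_1^y\frac{1}{T_\delta(z)}\,dz\,dy$ and $\phi(x)=x(\log x-1)+1$ (with $\phi(0)=1$). Then: (P1) $\phi_\delta''=\frac{1}{T_\delta}$ and $\phi_\delta(1)=\phi_\delta'(1)=0$; (P2) $\phi_\delta(x)\to\phi(x)$ as $\delta\to0$ for every $x\ge0$; (P3) $\phi_\delta(x)\ge0$ for all $x\in\mathbb{R}$; (P4) $\phi_\delta(x)\le\phi(x)+\frac{\delta}{2(1-\delta)}x^2+3$ for all $x\ge0$; (P5) $\phi_\delta(x)\to\infty$ as $\delta\to0$ for every $x<0$.
   Context: For each admissible $\delta$, $T_\delta:\mathbb{R}\to\mathbb{R}$ is a smooth nondecreasing function with $T_\delta(u)=\delta$ for $u\le\delta$, $T_\delta(u)=u$ for $u\in[2\delta,\frac1\delta-1]$, $T_\delta(u)=\frac1\delta$ for $u\ge\frac1\delta$, and a smooth monotone interpolation on $[\delta,2\delta]$ and on $[\frac1\delta-1,\frac1\delta]$. *)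

(* Defs.v *)
From Stdlib Require Import Reals.
From Coquelicot Require Import Coquelicot.
Open Scope R_scope.

Definition admissible (d : R) : Prop :=
  0 < d /\ 2 * d < / d - 1 /\ d < / 4.

Definition is_T_delta (d : R) (T : R -> R) : Prop :=
  (forall (n : nat) (x : R), ex_derive_n T n x) /\
  (forall u v : R, u <= v -> T u <= T v) /\
  (forall u : R, u <= d -> T u = d) /\
  (forall u : R, 2 * d <= u <= / d - 1 -> T u = u) /\
  (forall u : R, / d <= u -> T u = / d).

Definition phi_delta (T : R -> R) (x : R) : R :=
  RInt (fun y => RInt (fun z => / T z) 1 y) 1 x.

Definition phi (x : R) : R :=
  if Req_EM_T x 0 then 1 else x * (ln x - 1) + 1.

(* Main.v *)
Require Import Defs.
From Stdlib Require Import Reals Lra Psatz.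
From Coquelicot Require Import Coquelicot.
Open Scope R_scope.
Ltac cont_by_deriv := apply (@ex_derive_continuous R_AbsRing R_NormedModule); auto_derive.

Lemma at_right0_intro (P : R -> Prop) e : 0 < e -> (forall d, 0 < d < e -> P d) -> at_right 0 P.
Proof.
  intros He H. exists (mkposreal e He). intros y Hy Hy0. apply H. split; auto.
  unfold ball in Hy; simpl in Hy; unfold AbsRing_ball, abs, minus, plus, opp in Hy; simpl in Hy.
  apply Rabs_def2 in Hy. lra.
Qed.

Lemma ball_R (x y e : R) : Rabs (y - x) < e -> ball x e y.
Proof.
  intros H. unfold ball; simpl; unfold AbsRing_ball, abs, minus, plus, opp; simpl. exact H.
Qed.

Lemma adm_small d : 0 < d < / 4 -> admissible d.
Proof.
  intros [H1 H2]. split; [lra|split; [|lra]].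
  assert (/ / 4 < / d) by (apply Rinv_lt_contravar; nra).
  rewrite Rinv_inv in H. lra.
Qed.

Lemma cont_everywhere_RInt (f : R -> R) a b : (forall z, continuous f z) -> ex_RInt f a b.
Proof. intros H. apply (@ex_RInt_continuous R_CompleteNormedModule). intros; apply H. Qed.

Lemma antideriv (F f : R -> R) a b :
  (forall x, Rmin a b <= x <= Rmax a b -> is_derive F x (f x)) ->
  (forall x, Rmin a b <= x <= Rmax a b -> continuous f x) ->
  RInt f a b = F b - F a.
Proof. intros H1 H2. apply is_RInt_unique. apply (is_RInt_derive F f a b H1 H2). Qed.

Lemma derive_RInt_ev (f : R -> R) (a y : R) : (forall z, continuous f z) ->
  is_derive (fun y => RInt f a y) y (f y).
Proof.
  intros H. apply is_derive_RInt with (a := a).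
  - exists (mkposreal 1 Rlt_0_1). intros b _. apply RInt_correct. apply cont_everywhere_RInt; auto.
  - apply H.
Qed.

Lemma is_derive_eq (F : R -> R) x l l' : is_derive F x l -> l = l' -> is_derive F x l'.
Proof. intros H ->; exact H. Qed.

Lemma representation (f : R -> R) x : (forall z, continuous f z) ->
  RInt (fun y => RInt f 1 y) 1 x = RInt (fun z => (x - z) * f z) 1 x.
Proof.
  intros Hc.
  assert (Hc2 : forall z, continuous (fun z => z * f z) z).
  { intros z. apply (continuous_mult (fun z => z) f); [apply continuous_id| apply Hc]. }
  rewrite (antideriv (fun y => y * RInt f 1 y - RInt (fun z => z * f z) 1 y)).
  2:{ intros y _.
      pose proof (derive_RInt_ev f 1 y Hc) as h1.
      pose proof (derive_RInt_ev (fun z => z * f z) 1 y Hc2) as h2.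
      pose proof (@is_derive_mult R_AbsRing (fun y => y) (fun y => RInt f 1 y) y _ _ (is_derive_id y) h1 Rmult_comm) as h3.
      pose proof (@is_derive_minus R_AbsRing R_NormedModule _ _ y _ _ h3 h2) as h4.
      eapply is_derive_eq; [exact h4|].
      unfold minus, plus, opp, mult, one; simpl. ring. }
  2:{ intros y _. apply (ex_derive_continuous (fun y => RInt f 1 y)). eexists. apply derive_RInt_ev; auto. }
  rewrite !RInt_point. unfold zero; simpl.
  transitivity (RInt (fun z => minus (scal x (f z)) (z * f z)) 1 x).
  2:{ apply RInt_ext. intros; unfold minus, plus, opp, scal, mult; simpl. unfold mult; simpl. ring. }
  rewrite (@RInt_minus R_CompleteNormedModule). rewrite (@RInt_scal R_CompleteNormedModule). unfold minus, plus, opp, scal, mult; simpl. unfold mult; simpl. ring.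
  apply cont_everywhere_RInt; auto.
  apply cont_everywhere_RInt; intros; apply (continuous_scal_r x f); auto.
  apply cont_everywhere_RInt; auto.
Qed.

Lemma Int1 x a b : 0 < Rmin a b ->
  RInt (fun z => (x - z) * / z) a b = (x * ln b - b) - (x * ln a - a).
Proof.
  intros H. apply (antideriv (fun z => x * ln z - z)).
  - intros z Hz. auto_derive. lra. field. lra.
  - intros z Hz. cont_by_deriv. lra.
Qed.

Lemma Int2 x c a b : 0 < Rmin a b ->
  RInt (fun z => (x - z) * / z + c * (x - z)) a b =
   (x * ln b - b - c * (x - b)^2 / 2) - (x * ln a - a - c * (x - a)^2/2).
Proof.
  intros H. apply (antideriv (fun z => x * ln z - z - c * (x - z)^2/2)).
  - intros z Hz. auto_derive. lra. field. lra.
  - intros z Hz. cont_by_deriv. lra.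
Qed.

Lemma Int3 x a b : 0 < Rmin a b ->
  RInt (fun z => (z - x) * / z) a b = (b - x * ln b) - (a - x * ln a).
Proof.
  intros H. apply (antideriv (fun z => z - x * ln z)).
  - intros z Hz. auto_derive. lra. field. lra.
  - intros z Hz. cont_by_deriv. lra.
Qed.

Lemma Int4 x e a b : 
  RInt (fun z => (z - x) * e) a b = ((b - x)^2 * e / 2) - ((a - x)^2 * e / 2).
Proof.
  apply (antideriv (fun z => (z - x)^2 * e / 2)).
  - intros z Hz. auto_derive; [auto|field].
  - intros z Hz. cont_by_deriv; auto.
Qed.

Lemma phi_nonneg x : 0 <= x -> 0 <= phi x.
Proof.
  intros Hx. unfold phi. destruct (Req_EM_T x 0). lra.
  pose proof (exp_ineq1_le (- ln x)) as H.
  rewrite exp_Ropp, exp_ln in H by lra.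
  assert (x * (1 + - ln x) <= x * / x) by (apply Rmult_le_compat_l; lra).
  rewrite Rinv_r in H0 by auto. nra.
Qed.
Section TD.
Variables (d : R) (t : R -> R).
Hypothesis Hd : admissible d.
Hypothesis Ht : is_T_delta d t.

Lemma t_ge u : d <= t u.
Proof.
  destruct Ht as [_ [Hm [Hl _]]].
  destruct (Rle_dec u d) as [h|h].
  - rewrite Hl; lra.
  - rewrite <- (Hl d) at 1 by lra. apply Hm; lra.
Qed.

Lemma t_pos u : 0 < t u.
Proof. pose proof (t_ge u). destruct Hd. lra. Qed.

Lemma t_cont u : continuous t u.
Proof.
  destruct Ht as [Hn _]. apply (@ex_derive_continuous R_AbsRing R_NormedModule). exact (Hn 1%nat u).
Qed.

Lemma f_cont u : continuous (fun z => / t z) u.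
Proof. apply continuous_Rinv_comp. apply t_cont. apply Rgt_not_eq, t_pos. Qed.

Lemma f_pos u : 0 < / t u.
Proof. apply Rinv_0_lt_compat, t_pos. Qed.

Lemma f_le u : / t u <= / d.
Proof. destruct Hd. apply Rinv_le_contravar; [lra|apply t_ge]. Qed.

Lemma f_low u : u <= d -> / t u = / d.
Proof. intros h. destruct Ht as [_ [_ [Hl _]]]. rewrite Hl; auto. Qed.

Lemma f_mid u : 2 * d <= u <= / d - 1 -> / t u = / u.
Proof. intros h. destruct Ht as [_ [_ [_ [Hm _]]]]. rewrite Hm; auto. Qed.

Lemma f_high u : / d - 1 <= u -> / t u <= d / (1 - d).
Proof.
  intros h. destruct Ht as [_ [Hmo [_ [Hm _]]]]. destruct Hd as [h0 [h1 h2]].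
  assert (e : d / (1 - d) = / (/ d - 1)) by (field; lra).
  rewrite e. apply Rinv_le_contravar. lra.
  rewrite <- (Hm (/ d - 1)) at 1 by lra. apply Hmo; lra.
Qed.

Definition g x z := (x - z) * / t z.

Lemma g_cont x z : continuous (g x) z.
Proof.
  unfold g. apply (continuous_mult (fun z => x - z) (fun z => / t z)).
  apply (continuous_minus (fun _ => x) (fun z => z)). apply continuous_const. apply continuous_id.
  apply f_cont.
Qed.

Lemma rep x : phi_delta t x = RInt (g x) 1 x.
Proof. unfold phi_delta. apply representation. apply f_cont. Qed.

Definition h x z := (z - x) * / t z.

Lemma h_cont x z : continuous (h x) z.
Proof.
  unfold h. apply (continuous_mult (fun z => z - x) (fun z => / t z)).
  apply (continuous_minus (fun z => z) (fun _ => x)). apply continuous_id. apply continuous_const.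
  apply f_cont.
Qed.

Lemma rep2 x : phi_delta t x = RInt (h x) x 1.
Proof.
  rewrite rep. rewrite <- (@opp_RInt_swap R_CompleteNormedModule).
  2: apply cont_everywhere_RInt, g_cont.
  rewrite <- (@RInt_opp R_CompleteNormedModule).
  2: apply cont_everywhere_RInt, g_cont.
  apply RInt_ext. intros. unfold g, h, opp; simpl. ring.
Qed.


Lemma dfacts : 0 < d /\ d < / 4.
Proof. destruct Hd as [a [b c]]. split; lra. Qed.

Lemma hinv4 : 4 < / d.
Proof. destruct dfacts as [d0 d1].
  assert (/ / 4 < / d) by (apply Rinv_lt_contravar; nra). rewrite Rinv_inv in H. lra. Qed.

Lemma P3 x : 0 <= phi_delta t x.
Proof.
 destruct (Rle_dec 1 x).
 - rewrite rep. apply RInt_ge_0; auto. apply cont_everywhere_RInt, g_cont.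
   intros z Hz. unfold g. apply Rmult_le_pos. lra. left; apply f_pos.
 - rewrite rep2. apply RInt_ge_0. lra. apply cont_everywhere_RInt, h_cont.
   intros z Hz; unfold h; apply Rmult_le_pos; [lra| left; apply f_pos].
Qed.

Lemma chas x a b : RInt (h x) a 1 = RInt (h x) a b + RInt (h x) b 1.
Proof.
  rewrite <- (@RInt_Chasles R_CompleteNormedModule _ a b 1); try (apply cont_everywhere_RInt, h_cont).
  reflexivity.
Qed.

Lemma P4 x : 0 <= x -> phi_delta t x <= phi x + d / (2 * (1 - d)) * x ^ 2 + 3.
Proof.
  intros Hx. destruct dfacts as [d0 d1].
  assert (hinv : 4 < / d).
  { assert (/ / 4 < / d) by (apply Rinv_lt_contravar; nra). rewrite Rinv_inv in H. lra. }
  assert (hc : 0 <= d / (1 - d)) by (apply Rmult_le_pos; [lra| left; apply Rinv_0_lt_compat; lra]).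
  assert (hc2 : d / (2 * (1 - d)) = d / (1 - d) / 2) by (field; lra).
  assert (hq : 0 <= d / (2 * (1 - d)) * x ^ 2) by (rewrite hc2; apply Rmult_le_pos; [lra|]; nra).
  pose proof (phi_nonneg x Hx) as hphi.
  destruct (Rle_dec 1 x).
  - rewrite rep. eapply Rle_trans.
    { apply (RInt_le _ (fun z => (x - z) * / z + (d / (1 - d)) * (x - z))); auto.
      apply cont_everywhere_RInt, g_cont.
      apply (@ex_RInt_continuous R_CompleteNormedModule). intros z Hz. rewrite Rmin_left, Rmax_right in Hz by lra.
      cont_by_deriv. lra.
      intros z Hz. unfold g. destruct (Rle_dec z (/ d - 1)).
      + rewrite f_mid by lra. assert (0 <= d / (1 - d) * (x - z)) by (apply Rmult_le_pos; lra). lra.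
      + pose proof (f_high z ltac:(lra)).
        assert (0 <= (x - z) * / z) by (apply Rmult_le_pos; [lra| left; apply Rinv_0_lt_compat; lra]).
        assert ((x - z) * / t z <= (x - z) * (d / (1 - d))) by (apply Rmult_le_compat_l; lra).
        lra. }
    rewrite Int2 by (rewrite Rmin_left; lra). rewrite ln_1.
    unfold phi; destruct (Req_EM_T x 0); [lra|]. rewrite hc2.
    set (c := d / (1 - d)). assert (c * (x - 1) ^ 2 <= c * x ^ 2). apply Rmult_le_compat_l. unfold c; lra. nra. replace ((x - x) ^ 2) with 0 by ring. replace (x * (ln x - 1)) with (x * ln x - x) by ring. lra.
  - rewrite rep2. destruct (Rle_dec (2 * d) x).
    + rewrite (RInt_ext _ (fun z => (z - x) * / z)).
      2:{ intros z Hz. rewrite Rmin_left, Rmax_right in Hz by lra. unfold h. rewrite f_mid by lra. auto. }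
      rewrite Int3 by (rewrite Rmin_left; lra). rewrite ln_1.
      unfold phi; destruct (Req_EM_T x 0); [lra|]. lra.
    + rewrite (chas x x (2 * d)).
      assert (A1 : RInt (h x) x (2 * d) <= 4 * d).
      { eapply Rle_trans. apply (RInt_le _ (fun _ => 2)). lra. apply cont_everywhere_RInt, h_cont.
        apply ex_RInt_const.
        intros z Hz. unfold h. pose proof (f_le z). pose proof (f_pos z).
        assert ((z - x) * / t z <= (2 * d) * / d) by (apply Rmult_le_compat; lra).
        replace (2 * d * / d) with 2 in H1 by (field; lra). lra.
        rewrite RInt_const. unfold scal; simpl; unfold mult; simpl. lra. }
      rewrite (RInt_ext _ (fun z => (z - x) * / z) (2 * d) 1).
      2:{ intros z Hz. rewrite Rmin_left, Rmax_right in Hz by lra. unfold h. rewrite f_mid by lra. auto. }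
      rewrite Int3 by (rewrite Rmin_left; lra). rewrite ln_1.
      assert (ln (2 * d) < 0) by (rewrite <- ln_1; apply ln_increasing; lra).
      assert (x * ln (2 * d) <= 0) by nra. lra.
Qed.

Lemma P2pos x : 0 < x -> 2 * d <= Rmin x 1 -> Rmax x 1 <= / d - 1 -> phi_delta t x = phi x.
Proof.
  intros H0 H1 H2. destruct dfacts as [d0 d1]. rewrite rep.
  rewrite (RInt_ext _ (fun z => (x - z) * / z)).
  2:{ intros z Hz. unfold g. rewrite f_mid. auto.
      rewrite Rmin_comm in H1; rewrite Rmax_comm in H2. lra. }
  rewrite Int1. rewrite ln_1. unfold phi; destruct (Req_EM_T x 0); [lra|]. ring.
  rewrite Rmin_comm in H1. lra.
Qed.

Lemma P2zero : Rabs (phi_delta t 0 - 1) <= 2 * d.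
Proof.
  destruct dfacts as [d0 d1]. pose proof hinv4. rewrite rep2. rewrite (chas 0 0 (2 * d)).
  assert (A1 : RInt (h 0) 0 (2 * d) <= 4 * d).
  { eapply Rle_trans. apply (RInt_le _ (fun _ => 2)). lra. apply cont_everywhere_RInt, h_cont.
    apply ex_RInt_const.
    intros z Hz. unfold h. pose proof (f_le z) as Q1. pose proof (f_pos z) as Q2.
    assert (Q3 : (z - 0) * / t z <= (2 * d) * / d) by (apply Rmult_le_compat; lra).
    replace (2 * d * / d) with 2 in Q3 by (field; lra). lra.
    rewrite RInt_const. unfold scal; simpl; unfold mult; simpl. lra. }
  assert (A2 : 0 <= RInt (h 0) 0 (2 * d)).
  { apply RInt_ge_0. lra. apply cont_everywhere_RInt, h_cont.
    intros z Hz; unfold h; apply Rmult_le_pos; [lra| left; apply f_pos]. }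
  rewrite (RInt_ext _ (fun z => (z - 0) * / z) (2 * d) 1).
  2:{ intros z Hz. rewrite Rmin_left, Rmax_right in Hz by lra. unfold h. rewrite f_mid by lra. auto. }
  rewrite Int3 by (rewrite Rmin_left; lra).
  apply Rabs_le. lra.
Qed.

Lemma P5bound x : x < 0 -> x ^ 2 * / d / 2 <= phi_delta t x.
Proof.
  intros Hx. destruct dfacts as [d0 d1]. rewrite rep2. rewrite (chas x x 0).
  assert (A2 : 0 <= RInt (h x) 0 1).
  { apply RInt_ge_0. lra. apply cont_everywhere_RInt, h_cont.
    intros z Hz; unfold h; apply Rmult_le_pos; [lra| left; apply f_pos]. }
  rewrite (RInt_ext _ (fun z => (z - x) * / d) x 0).
  2:{ intros z Hz. rewrite Rmin_left, Rmax_right in Hz by lra. unfold h. rewrite f_low by lra. auto. }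
  rewrite Int4. 
  replace ((0 - x) ^ 2) with (x ^ 2) by ring. replace ((x - x) ^ 2 * / d / 2) with 0 by (field; lra).
  lra.
Qed.

End TD.

Theorem lemma2p1 (T : R -> R -> R)
  (HT : forall d : R, admissible d -> is_T_delta d (T d)) :
  (* (P1) *)
  (forall d : R, admissible d ->
     exists dphi : R -> R,
       (forall x : R, is_derive (phi_delta (T d)) x (dphi x)) /\
       (forall x : R, is_derive dphi x (/ T d x)) /\
       phi_delta (T d) 1 = 0 /\ dphi 1 = 0) /\
  (* (P2) *)
  (forall x : R, 0 <= x ->
     filterlim (fun d => phi_delta (T d) x) (at_right 0) (locally (phi x))) /\
  (* (P3) *)
  (forall d : R, admissible d -> forall x : R, 0 <= phi_delta (T d) x) /\
  (* (P4) *)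
  (forall d : R, admissible d -> forall x : R, 0 <= x ->
     phi_delta (T d) x <= phi x + d / (2 * (1 - d)) * x ^ 2 + 3) /\
  (* (P5) *)
  (forall x : R, x < 0 ->
     filterlim (fun d => phi_delta (T d) x) (at_right 0) (Rbar_locally p_infty)).
Proof.
  split; [|split; [|split; [|split]]].
  - intros d Hd. exists (fun y => RInt (fun z => / T d z) 1 y). split; [|split; [|split]].
    + intros x. unfold phi_delta. apply (derive_RInt_ev (fun y => RInt (fun z => / T d z) 1 y)). intros z.
      apply (@ex_derive_continuous R_AbsRing R_NormedModule). eexists.
      apply (derive_RInt_ev (fun z => / T d z)). apply (f_cont d); auto.
    + intros x. apply (derive_RInt_ev (fun z => / T d z)). apply (f_cont d); auto.
    + unfold phi_delta. rewrite RInt_point. reflexivity.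
    + simpl. rewrite RInt_point. reflexivity.
  - intros x Hx. destruct (Req_dec x 0) as [->|hx].
    + apply filterlim_locally. intros eps. pose proof (cond_pos eps) as He.
      apply at_right0_intro with (e := Rmin (/ 4) (eps / 4)).
      { apply Rmin_glb_lt; lra. }
      intros d Hd'.
      assert (d < / 4) by (eapply Rlt_le_trans; [apply Hd' | apply Rmin_l]).
      assert (d < eps / 4) by (eapply Rlt_le_trans; [apply Hd' | apply Rmin_r]).
      assert (Ha : admissible d) by (apply adm_small; lra).
      pose proof (P2zero d (T d) Ha (HT d Ha)) as Q.
      apply ball_R. unfold phi. destruct (Req_EM_T 0 0); [|lra]. lra.
    + apply (filterlim_ext_loc (fun _ => phi x)); [|apply filterlim_const].
      assert (Hx2 : 0 < / (x + 2)) by (apply Rinv_0_lt_compat; lra).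
      apply at_right0_intro with (e := Rmin (/ 4) (Rmin (x / 2) (/ (x + 2)))).
      { apply Rmin_glb_lt; [lra|]. apply Rmin_glb_lt; lra. }
      intros d Hd'.
      assert (d < / 4) by (eapply Rlt_le_trans; [apply Hd' | apply Rmin_l]).
      assert (d < x / 2) by (eapply Rlt_le_trans; [apply Hd' | eapply Rle_trans; [apply Rmin_r| apply Rmin_l]]).
      assert (d < / (x + 2)) by (eapply Rlt_le_trans; [apply Hd' | eapply Rle_trans; [apply Rmin_r| apply Rmin_r]]).
      assert (Ha : admissible d) by (apply adm_small; lra).
      assert (/ / (x + 2) < / d) by (apply Rinv_lt_contravar; nra).
      rewrite Rinv_inv in H2.
      symmetry. apply (P2pos d (T d) Ha (HT d Ha)); [lra| |].
      * apply Rmin_glb; lra.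
      * apply Rmax_lub; lra.
  - intros d Hd x. apply (P3 d (T d) Hd (HT d Hd)).
  - intros d Hd x Hx. apply (P4 d (T d) Hd (HT d Hd) x Hx).
  - intros x Hx. unfold filterlim, filter_le, filtermap. intros P [M HM].
    assert (Hm : 0 < x ^ 2 / (2 * (Rabs M + 1))).
    { pose proof (Rabs_pos M). apply Rdiv_lt_0_compat; nra. }
    apply at_right0_intro with (e := Rmin (/ 4) (x ^ 2 / (2 * (Rabs M + 1)))).
    { apply Rmin_glb_lt; lra. }
    intros d Hd'.
    assert (d < / 4) by (eapply Rlt_le_trans; [apply Hd' | apply Rmin_l]).
    assert (hd : d < x ^ 2 / (2 * (Rabs M + 1))) by (eapply Rlt_le_trans; [apply Hd' | apply Rmin_r]).
    assert (Ha : admissible d) by (apply adm_small; lra).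
    pose proof (P5bound d (T d) Ha (HT d Ha) x Hx) as Q.
    apply HM. pose proof (Rabs_pos M). pose proof (Rle_abs M).
    assert (K : d * (2 * (Rabs M + 1)) < x ^ 2).
    { apply Rmult_lt_compat_r with (r := 2 * (Rabs M + 1)) in hd; [|lra].
      replace (x ^ 2 / (2 * (Rabs M + 1)) * (2 * (Rabs M + 1))) with (x ^ 2) in hd by (field; lra). lra. }
    assert (K2 : Rabs M + 1 < x ^ 2 * / d / 2).
    { apply Rmult_lt_reg_r with (r := 2 * d); [lra|].
      replace (x ^ 2 * / d / 2 * (2 * d)) with (x ^ 2) by (field; lra). lra. }
    lra.
Qed.
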